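(* Let $X$ be a random variable with survival function $\overline{F}(x) = \mathbb{P}(X>x)$ given by $\overline{F}(x) = 1$ for $x < 2$ and $\overline{F}(x) = 2^{-\lfloor \log_2 x \rfloor}$ for $x \geq 2$ (i.e. $\mathbb{P}(X = 2^m) = 2^{-m}$ for $m \in \mathbb{N} = \{1,2,\dots\}$, the St. Petersburg lottery). For $n \geq 2$ let $X_1, \dots, X_n$ be i.i.d. copies of $X$ and $\overline{X}_n = \frac{1}{n}\sum_{i=1}^n X_i$. Then $X \leq_{\mathrm{st}} \overline{X}_n$ for all $n \in \{2^k : k \in \mathbb{N}\}$.
   Context: For random variables $X, Y$, $X \leq_{\mathrm{st}} Y$ means $\mathbb{P}(X > x) \leq \mathbb{P}(Y > x)$ for all $x \in \mathbb{R}$. *)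

(* Defs.v *)
From HB Require Import structures.
From mathcomp Require Import all_boot all_order all_algebra.
From mathcomp Require Import all_classical all_reals all_analysis.
Set Implicit Arguments. Unset Strict Implicit. Unset Printing Implicit Defensive.
Import Order.TTheory GRing.Theory Num.Theory.
Local Open Scope classical_set_scope.
Local Open Scope ring_scope.

Definition stpete_surv {R : realType} (x : R) : R :=
  if x < 2 then 1 else (2 : R) ^ (- Num.floor (ln x / ln 2)).

(* Mutual independence of a finite family of real random variables:
   P(/\_i X_i \in B_i) = prod_i P(X_i \in B_i) for all Borel sets B_i
   (taking B_i = setT recovers the product rule for every subfamily). *)
Definition mutually_independent {R : realType} {d : measure_display}
  {T : measurableType d} (P : probability T R) (n : nat)
  (Xs : 'I_n -> T -> R) : Prop :=
  forall B : 'I_n -> set R, (forall i, measurable (B i)) ->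
    P (\bigcap_(i in [set: 'I_n]) (Xs i @^-1` B i)) =
    (\prod_(i < n) P (Xs i @^-1` B i))%E.

Definition surv {R : realType} {d : measure_display} {T : measurableType d}
  (P : probability T R) (Y : T -> R) (x : R) : \bar R :=
  P [set t | x < Y t].

(* Main.v *)
Require Import Defs.
From HB Require Import structures.
From mathcomp Require Import all_boot all_order all_algebra.
From mathcomp Require Import all_classical all_reals all_analysis.
From mathcomp Require Import ring lra zify.
From Stdlib Require Import FunctionalExtensionality.
Import Order.TTheory GRing.Theory Num.Theory.
Local Open Scope classical_set_scope.
Local Open Scope ring_scope.

Fixpoint Ex {R : realFieldType} (M : nat) (W : nat -> R) (G : nat -> nat)
   (n : nat) (f : nat -> R) : R :=
  match n with
  | 0%N => f 0%N
  | n'.+1 => \sum_(l < M) W l * Ex M W G n' (fun s => f (G l + s)%N)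
  end.

Lemma Ex_lin (R : realFieldType) M (W : nat -> R) G n c0 c1 c2 f1 f2 :
  \sum_(l < M) W l = 1 ->
  Ex M W G n (fun s => c0 + c1 * f1 s + c2 * f2 s) =
  c0 + c1 * Ex M W G n f1 + c2 * Ex M W G n f2.
Proof.
move=> hW; elim: n f1 f2 => [|n IH] f1 f2 //=.
under eq_bigr do rewrite (IH (fun s => f1 (G _ + s)%N) (fun s => f2 (G _ + s)%N)).
under eq_bigr do rewrite !mulrDr.
rewrite !big_split /= -mulr_suml hW mul1r !mulr_sumr.
by congr (_ + _ + _); apply: eq_bigr => l _; ring.
Qed.

Lemma Ex_const (R : realFieldType) M (W : nat -> R) G n c :
  \sum_(l < M) W l = 1 -> Ex M W G n (fun _ => c) = c.
Proof.
move=> hW; elim: n => [|n IH] //=.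
under eq_bigr do rewrite IH.
by rewrite -mulr_suml hW mul1r.
Qed.

Lemma Ex_mono (R : realFieldType) M (W : nat -> R) G n f1 f2 :
  (forall l, 0 <= W l) -> (forall s, f1 s <= f2 s) ->
  Ex M W G n f1 <= Ex M W G n f2.
Proof.
move=> hW; elim: n f1 f2 => [|n IH] f1 f2 h12 //=.
apply: ler_sum => l _; apply: ler_wpM2l => //; exact: IH.
Qed.

Lemma Ex_split (R : realFieldType) M (W : nat -> R) G a b f :
  Ex M W G (a + b) f = Ex M W G a (fun s => Ex M W G b (fun s' => f (s + s')%N)).
Proof.
elim: a f => [|a IH] f /=; first by congr Ex.
apply: eq_bigr => l _; rewrite IH; congr (_ * _); congr Ex.
apply: functional_extensionality => s; congr Ex.
by apply: functional_extensionality => s'; rewrite addnA.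
Qed.

Definition hh {R : realFieldType} : R := 2^-1.
Definition wt {R : realFieldType} (M l : nat) : R :=
  if (l.+1 < M)%N then hh ^+ l.+1 else hh ^+ l.
Definition gg (l : nat) : nat := (2 ^ l.+1)%N.
Definition ind {R : realFieldType} (t s : nat) : R := if (t <= s)%N then 1 else 0.

Lemma hhS (R : realFieldType) i : (hh : R) ^+ i = 2 * hh ^+ i.+1.
Proof. by rewrite exprS mulrA /hh divff ?mul1r // pnatr_eq0. Qed.

Lemma hh_ge0 (R : realFieldType) i : 0 <= (hh : R) ^+ i.
Proof. by apply: exprn_ge0; rewrite /hh invr_ge0. Qed.

Lemma tail_geom (R : realFieldType) K i : (i <= K)%N ->
  \sum_(l < K) (if (i <= l)%N then (hh : R) ^+ l.+1 else 0) = hh ^+ i - hh ^+ K.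
Proof.
elim: K => [|K IH]; first by rewrite leqn0 => /eqP ->; rewrite big_ord0 subrr.
rewrite leq_eqVlt => /orP [/eqP ->|].
  rewrite subrr big1 // => l _; have := ltn_ord l; case: ifP => // ?; lia.
rewrite ltnS => hiK; rewrite big_ord_recr /= IH // hiK.
rewrite (hhS R K); ring.
Qed.

Lemma wt_tail (R : realFieldType) M i : (i < M)%N ->
  \sum_(l < M) (if (i <= l)%N then (wt M l : R) else 0) = hh ^+ i.
Proof.
case: M => [//|K] hi; rewrite big_ord_recr /=.
rewrite (eq_bigr (fun l : 'I_K => if (i <= l)%N then (hh : R) ^+ l.+1 else 0)).
  rewrite tail_geom // /wt ltnn -ltnS hi; ring.
by move=> l _; rewrite /wt /= ltnS ltn_ord.
Qed.

Lemma wt_sum (R : realFieldType) M : (0 < M)%N -> \sum_(l < M) (wt M l : R) = 1.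
Proof. by move=> hM; rewrite -(expr0 (hh : R)) -(@wt_tail R M 0 hM); apply: eq_bigr. Qed.

Lemma wt_ge0 (R : realFieldType) M l : 0 <= (wt M l : R).
Proof. by rewrite /wt; case: ifP => _; apply: hh_ge0. Qed.

Lemma ind_le1 (R : realFieldType) t s : (ind t s : R) <= 1.
Proof. by rewrite /ind; case: ifP. Qed.
Lemma ind_ge0 (R : realFieldType) t s : 0 <= (ind t s : R).
Proof. by rewrite /ind; case: ifP. Qed.

Lemma key (R : realFieldType) M k : forall i, (i + 1 + k <= M)%N ->
  (hh : R) ^+ i <= Ex M (wt M) gg (2 ^ k) (ind (2 ^ (k + i + 1))).
Proof.
elim: k => [|k IH] i hi.
  rewrite expn0 /= -(@wt_tail R M i); last by lia.
  rewrite le_eqVlt; apply/orP; left; apply/eqP/eq_bigr => l _; rewrite /= /ind /gg addn0 add0n leq_exp2l // addn1 ltnS.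
  by case: ifP; rewrite ?mulr1 ?mulr0.
have hM : (0 < M)%N by lia.
have hW := @wt_sum R M hM.
set t := (2 ^ (k + i + 1))%N.
have ha := IH i ltac:(lia).
have ha' := IH i.+1 ltac:(lia).
have e2 : (2 ^ (k.+1 + i + 1) = 2 * t)%N by rewrite /t -expnS; apply: f_equal; lia.
have e2' : (2 ^ (k + i.+1 + 1) = 2 * t)%N by rewrite /t -expnS; apply: f_equal; lia.
rewrite e2' in ha'; rewrite e2 expnS mul2n -addnn Ex_split.
set a := Ex M (wt M) gg (2 ^ k) (ind t) in ha *.
set a' := Ex M (wt M) gg (2 ^ k) (ind (2 * t)) in ha' *.
have a1 : a <= 1.
  rewrite -(@Ex_const R M (wt M) gg (2 ^ k) 1 hW); apply: Ex_mono => // s.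
  exact: wt_ge0. exact: ind_le1.
have step1 : forall s,
  a' + (1 - a) * ind (2 * t) s + (a - a') * ind t s <=
  Ex M (wt M) gg (2 ^ k) (fun s' => ind (2 * t) (s + s')).
  move=> s.
  have -> : a' + (1 - a) * ind (2 * t) s + (a - a') * ind t s =
    ind (2 * t) s + (1 - ind t s) * a' + (ind t s - ind (2 * t) s) * a.
    rewrite /ind; case: ifP; case: ifP => *; ring.
  rewrite -Ex_lin //; apply: Ex_mono => [l|s']; first exact: wt_ge0.
  rewrite /ind; case: (leqP (2 * t) (s + s')); case: (leqP t s);
    case: (leqP (2 * t) s); case: (leqP t s'); case: (leqP (2 * t) s') => *;
    rewrite ?mulr1 ?mulr0 ?addr0 ?add0r ?subrr ?subr0; try lra; lia.
apply: le_trans; last first.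
  by apply: Ex_mono; [exact: wt_ge0 | exact: step1].
rewrite Ex_lin //.
have hS := hhS R i.
have p1 : 0 <= (1 - a) * (a' - hh ^+ i.+1) by apply: mulr_ge0; lra.
have p2 : 0 <= (a - hh ^+ i) * a.
  by apply: mulr_ge0; have := hh_ge0 R i; lra.
rewrite hS in p2 *; rewrite -/a -/a'; nra.
Qed.

Definition fcons (M n : nat) (j : 'I_M) (u : {ffun 'I_n -> 'I_M}) : {ffun 'I_n.+1 -> 'I_M} :=
  [ffun i : 'I_n.+1 => if unlift ord0 i is Some i' then u i' else j].

Arguments fcons {M n}.

Lemma fcons0 M n (j : 'I_M) (u : {ffun 'I_n -> 'I_M}) : fcons j u ord0 = j.
Proof. by rewrite /fcons ffunE unlift_none. Qed.

Lemma fconsS M n (j : 'I_M) (u : {ffun 'I_n -> 'I_M}) i : fcons j u (lift ord0 i) = u i.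
Proof. by rewrite /fcons ffunE liftK. Qed.

Lemma fcons_bij M n : bijective (fun p : 'I_M * {ffun 'I_n -> 'I_M} => fcons p.1 p.2).
Proof.
exists (fun v : {ffun 'I_n.+1 -> 'I_M} => (v ord0, [ffun i => v (lift ord0 i)])).
  by case=> j u /=; rewrite fcons0; congr pair; apply/ffunP => i; rewrite ffunE fconsS.
move=> v /=; apply/ffunP => i; rewrite /fcons ffunE.
by case: unliftP => [i' ->|->] //; rewrite ffunE.
Qed.

Lemma Ex_ffun (R : realFieldType) M (W : nat -> R) (G : nat -> nat) n f :
  \sum_(v : {ffun 'I_n -> 'I_M}) (\prod_(i < n) W (v i)) * f (\sum_(i < n) G (v i))%N
  = Ex M W G n f.
Proof.
elim: n f => [|n IH] f /=.
  pose f0 : {ffun 'I_0 -> 'I_M} := ffun0 (card_ord 0).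
  rewrite (big_pred1 f0); first by rewrite !big_ord0 mul1r.
  by move=> v; apply/esym/eqP/ffunP => -[].
rewrite (reindex _ (onW_bij _ (@fcons_bij M n))) /=.
rewrite -(pair_big (fun _ => true) (fun _ => true)
  (fun j u => (\prod_(i < n.+1) W (fcons j u i)) * f (\sum_(i < n.+1) G (fcons j u i))%N)) /=.
apply: eq_bigr => j _; rewrite -IH mulr_sumr; apply: eq_bigr => u _.
rewrite big_ord_recl big_ord_recl /= !fcons0.
rewrite (eq_bigr (fun i => W (u i))); last by move=> i _; rewrite fconsS.
rewrite (eq_bigr (fun i => G (u i))); last by move=> i _; rewrite fconsS.
by rewrite mulrA.
Qed.

Lemma ln2_gt0 (R : realType) : 0 < ln (2 : R).
Proof. by apply: ln_gt0; lra. Qed.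

Lemma ln_le_nat (R : realType) (l : nat) (y : R) : 0 < y ->
  (l%:R <= ln y / ln 2) = (2 ^+ l <= y).
Proof.
move=> hy; rewrite ler_pdivlMr ?ln2_gt0 // mulr_natl -lnXn //.
by rewrite ler_ln // posrE exprn_gt0.
Qed.

Lemma ln_lt_nat (R : realType) (l : nat) (y : R) : 0 < y ->
  (ln y / ln 2 < l%:R) = (y < 2 ^+ l).
Proof.
move=> hy; rewrite ltr_pdivrMr ?ln2_gt0 // mulr_natl -lnXn //.
by rewrite ltr_ln // posrE exprn_gt0.
Qed.

Lemma two_pow_neg (R : realType) (l : nat) : (2 : R) ^ (- (l%:Z)) = hh ^+ l.
Proof. by rewrite -exprnN /hh exprVn. Qed.

Lemma sv (R : realType) (l : nat) (y : R) : 2 ^+ l <= y < 2 ^+ l.+1 ->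
  stpete_surv y = hh ^+ l.
Proof.
case/andP => h1 h2; rewrite /stpete_surv.
case: l h1 h2 => [|l] h1 h2.
  by rewrite expr1 in h2; rewrite h2 expr0.
have y2 : 2 <= y.
  have : 1 <= (2 : R) ^+ l by apply: exprn_ege1; lra.
  rewrite exprS in h1; lra.
have y0 : 0 < y by lra.
rewrite ltNge y2 /= -two_pow_neg; congr (_ ^ (- _)).
apply: floor_def; apply/andP; split.
  by rewrite -[X in X <= _]/((l.+1)%:R) ln_le_nat.
by rewrite -(PoszD l.+1 1) addn1 pmulrn ln_lt_nat.
Qed.

Lemma surv_bound (R : realType) (x : R) :
  exists m : nat, stpete_surv x <= hh ^+ m /\ x < 2 ^+ m.+1.
Proof.
case: (ltP x 2) => hx.
  by exists 0%N; split; [rewrite /stpete_surv hx expr0 | rewrite expr1].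
have x0 : 0 < x by lra.
have z0 : (0 <= Num.floor (ln x / ln 2))%R.
  by rewrite floor_ge0 divr_ge0 ?ln_ge0 ?(ltW (ln2_gt0 R)) //; lra.
exists `|Num.floor (ln x / ln 2)|%N.
have ez : Num.floor (ln x / ln 2) = (`|Num.floor (ln x / ln 2)|%N)%:Z by rewrite gez0_abs.
split.
  by rewrite /stpete_surv ltNge hx /= {1}ez two_pow_neg.
rewrite -ln_lt_nat //.
have := floorD1_gt (ln x / ln 2); rewrite {1}ez.
by rewrite -PoszD addn1 pmulrn.
Qed.

Lemma in_bigsetU (T : Type) (I : eqType) (s : seq I) (Q : pred I) (F : I -> set T) (t : T) :
  (\big[setU/set0]_(i <- s | Q i) F i) t -> exists i, [/\ i \in s, Q i & F i t].
Proof.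
elim: s => [|a s IH]; first by rewrite big_nil.
rewrite big_cons; case Qa : (Q a); [case=> [Ha|Hs] | move=> Hs].
- by exists a; rewrite ?mem_head.
- by case: (IH Hs) => i [hi Qi Fi]; exists i; rewrite // in_cons hi orbT.
- by case: (IH Hs) => i [hi Qi Fi]; exists i; rewrite // in_cons hi orbT.
Qed.

Lemma mu_bigU (R : realType) (d : measure_display) (T : measurableType d)
  (P : probability T R) (I : eqType) (s : seq I) (Q : pred I) (F : I -> set T) :
  uniq s -> (forall i, measurable (F i)) ->
  (forall i j, i != j -> F i `&` F j = set0) ->
  P (\big[setU/set0]_(i <- s | Q i) F i) = (\sum_(i <- s | Q i) P (F i))%E.
Proof.
move=> + mF dF; elim: s => [|a s IH]; first by rewrite !big_nil measure0.
case/andP => nas us.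
have -> : \big[setU/set0]_(i <- a :: s | Q i) F i = (if Q a then F a `|` \big[setU/set0]_(i <- s | Q i) F i else \big[setU/set0]_(i <- s | Q i) F i) by rewrite big_cons.
rewrite big_cons; case: (Q a); last exact: IH.
rewrite measureU //; first by congr (_ + _)%E; apply: IH.
- exact: bigsetU_measurable.
apply/seteqP; split => // t [Ha Hs]; have [i [hi _ Fi]] := @in_bigsetU T I s Q F t Hs.
have hai : a != i by apply: contraNneq nas => ->.
by have := dF a i hai; rewrite -subset0; apply; split.
Qed.

Lemma mpre (R : realType) (d : measure_display) (T : measurableType d)
  (f : T -> R) (B : set R) : measurable_fun setT f -> measurable B ->
  measurable (f @^-1` B).
Proof. by move=> mf mB; rewrite -[f @^-1` B]setTI; exact: mf. Qed.

Arguments mpre {R d T f B}.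

Lemma gt_pre (R : realType) (T : Type) (f : T -> R) a :
  [set t | a < f t] = f @^-1` `]a, +oo[.
Proof. by apply/seteqP; split => t /=; rewrite in_itv /= andbT. Qed.

Definition cell {R : realType} (M : nat) (dl : R) (l : nat) : set R :=
  [set y | 2 ^+ l.+1 - dl < y /\ ((l.+1 < M)%N -> y <= 2 ^+ l.+2 - dl)].

Lemma cell_meas (R : realType) M (dl : R) l : measurable (cell M dl l).
Proof.
rewrite /cell; case h : (l.+1 < M)%N.
  have -> : [set y | 2 ^+ l.+1 - dl < y /\ (true -> y <= 2 ^+ l.+2 - dl)]
    = `]2 ^+ l.+1 - dl, 2 ^+ l.+2 - dl]%classic.
    apply/seteqP; split => y /=; rewrite in_itv /=.
      by case => -> /(_ isT) ->.
    by case/andP => -> ->.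
  exact: measurable_itv.
have -> : [set y | 2 ^+ l.+1 - dl < y /\ (false -> y <= 2 ^+ l.+2 - dl)]
    = `]2 ^+ l.+1 - dl, +oo[%classic.
  apply/seteqP; split => y /=; rewrite in_itv /= ?andbT.
    by case.
  by move=> ->.
exact: measurable_itv.
Qed.

Lemma pow2_mono (R : realType) (a b : nat) : (a <= b)%N -> (2 : R) ^+ a <= 2 ^+ b.
Proof. by move=> hab; rewrite ler_eXn2l //; lra. Qed.

Lemma pow2_ge1 (R : realType) (a : nat) : 1 <= (2 : R) ^+ a.
Proof. by apply: exprn_ege1; lra. Qed.

Lemma cell_disj (R : realType) M (dl : R) l l' : (l < M)%N -> (l' < M)%N -> l != l' ->
  cell M dl l `&` cell M dl l' = set0.
Proof.
wlog: l l' / (l < l')%N.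
  move=> H hl hl' hll'; case: (ltngtP l l') => h; first exact: H.
    by rewrite setIC; apply: H => //; rewrite eq_sym.
  by rewrite h eqxx in hll'.
move=> hlt hl hl' _; apply/seteqP; split => // y [[h1 h2] [h3 h4]].
have hM : (l.+1 < M)%N by lia.
have := h2 hM; have : (2 : R) ^+ l.+2 <= 2 ^+ l'.+1 by apply: pow2_mono.
move=> *; simpl; lra.
Qed.

Lemma P_cell (R : realType) (d : measure_display) (T : measurableType d)
  (P : probability T R) (Y : T -> R) (mY : measurable_fun setT Y)
  (hY : forall x, surv P Y x = (stpete_surv x)%:E) M (dl : R) l :
  0 < dl <= 1 -> P (Y @^-1` cell M dl l) = (wt M l)%:E.
Proof.
case/andP => d0 d1.
have sva : forall j, P [set t | 2 ^+ j.+1 - dl < Y t] = (hh ^+ j)%:E.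
  move=> j; rewrite -/(surv P Y _) hY (@sv R j) //.
  have := pow2_ge1 R j; rewrite exprS => ?; apply/andP; split; lra.
rewrite /wt; case h : (l.+1 < M)%N.
  have eU : [set t | 2 ^+ l.+1 - dl < Y t] =
      Y @^-1` cell M dl l `|` [set t | 2 ^+ l.+2 - dl < Y t].
    have hm := @pow2_mono R _ _ (leqnSn l.+1).
    apply/seteqP; split => t /=; rewrite /cell /= h.
      by move=> ht; case: (leP (Y t) (2 ^+ l.+2 - dl)) => hb; [left | right].
    by case => [[]|] //; lra.
  have mA : measurable (Y @^-1` cell M dl l) by apply: (mpre mY); apply: cell_meas.
  have mB : measurable [set t | 2 ^+ l.+2 - dl < Y t].
    by rewrite gt_pre; apply: (mpre mY); apply: measurable_itv.
  have dAB : Y @^-1` cell M dl l `&` [set t | 2 ^+ l.+2 - dl < Y t] = set0.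
    apply/seteqP; split => // t [[h1 /= h2] h3]; have := h2 h; simpl in *; lra.
  have e0 := @measureU _ _ _ P _ _ mA mB dAB.
  have e : (P (Y @^-1` cell M dl l) + P [set t | (2 ^+ l.+2 - dl < Y t)%R] = (hh ^+ l)%:E)%E.
    by rewrite -e0 -eU; apply: sva.
  rewrite sva in e; move: e.
  case E : (P (Y @^-1` cell M dl l)) => [r| |] //=.
  move=> [er]; congr (_%:E); rewrite (hhS R l) in er; lra.
have -> : Y @^-1` cell M dl l = [set t | 2 ^+ l.+1 - dl < Y t].
  by apply/seteqP; split => t /=; rewrite /cell /= h; [case | ].
exact: sva.
Qed.

Theorem proposition3 (R : realType) (d : measure_display) (T : measurableType d)
  (P : probability T R) (k : nat) (hk : (0 < k)%N)
  (X : T -> R) (Xs : 'I_(2 ^ k) -> T -> R)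
  (mX : measurable_fun setT X) (mXs : forall i, measurable_fun setT (Xs i))
  (hX : forall x : R, surv P X x = (stpete_surv x)%:E)
  (hXs : forall (i : 'I_(2 ^ k)) (x : R), surv P (Xs i) x = (stpete_surv x)%:E)
  (hind : mutually_independent P Xs) :
  let Xbar : T -> R := fun t => ((2 ^ k)%:R^-1 * \sum_(i < 2 ^ k) Xs i t)%R in
  forall x : R, (surv P X x <= surv P Xbar x)%E.
Proof.
move=> Xbar x.
have n0 : (0 < 2 ^ k)%N by rewrite expn_gt0.
have [m [hsx hxm]] := surv_bound R x.
pose dl : R := Num.min 1 ((2 ^+ m.+1 - x) / 2).
have dl0 : 0 < dl by rewrite /dl lt_min; apply/andP; split; lra.
have dl1 : dl <= 1 by rewrite /dl ge_min lexx.
have dlx : x < 2 ^+ m.+1 - dl.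
  have : dl <= (2 ^+ m.+1 - x) / 2 by rewrite /dl ge_min lexx orbT.
  lra.
have dl01 : 0 < dl <= 1 by rewrite dl0 dl1.
pose M := (k + m + 1)%N.
pose rect (v : {ffun 'I_(2 ^ k) -> 'I_M}) :=
  \bigcap_(i in [set: 'I_(2 ^ k)]) (Xs i @^-1` cell M dl (v i)).
pose good (v : {ffun 'I_(2 ^ k) -> 'I_M}) :=
  (2 ^ k * 2 ^ m.+1 <= \sum_(i < 2 ^ k) gg (v i))%N.
pose E := \big[setU/set0]_(v <- index_enum {ffun 'I_(2 ^ k) -> 'I_M} | good v) rect v.
have mrect : forall v, measurable (rect v).
  move=> v; apply: fin_bigcap_measurable; first exact: finite_finset.
  by move=> i _; apply: (mpre (mXs i)); exact: cell_meas.
have Prect : forall v, P (rect v) = (\prod_(i < 2 ^ k) wt M (v i))%:E.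
  move=> v; rewrite /rect (hind (fun i => cell M dl (v i))); last first.
    by move=> i; exact: cell_meas.
  rewrite -prodEFin; apply: eq_bigr => i _.
  exact: P_cell.
have drect : forall v w, v != w -> rect v `&` rect w = set0.
  move=> v w hvw; case: (pickP (fun i => v i != w i)) => [i hi | hall]; last first.
    have evw : v = w by apply/ffunP => i; apply/eqP/negbFE/hall.
    by rewrite evw eqxx in hvw.
  apply/seteqP; split => // t [hv hw].
  have := @cell_disj R M dl (v i) (w i) (ltn_ord (v i)) (ltn_ord (w i)) hi.
  rewrite -subset0; apply; split; [exact: (hv i I) | exact: (hw i I)].
have PE : P E = (Ex M (wt M) gg (2 ^ k) (ind (2 ^ k * 2 ^ m.+1)))%:E.
  rewrite /E mu_bigU //; last exact: index_enum_uniq.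
  rewrite (eq_bigr (fun v : {ffun 'I_(2 ^ k) -> 'I_M} => (\prod_(i < 2 ^ k) wt M (v i))%:E)); last first.
    by move=> v _; exact: Prect.
  rewrite sumEFin -Ex_ffun big_mkcond; congr EFin; apply: eq_bigr => v _.
  by rewrite /ind /good; case: ifP => _; rewrite ?mulr1 ?mulr0.
have Esub : E `<=` [set t | x < Xbar t].
  move=> t Et; have [v [_ gv hv]] := @in_bigsetU T _ _ _ _ t Et; rewrite /=.
  have hi : forall i, 2 ^+ (v i).+1 - dl < Xs i t by move=> i; case: (hv i I).
  have s1 : \sum_(i < 2 ^ k) (2 ^+ (v i).+1 - dl) <= \sum_(i < 2 ^ k) Xs i t.
    by apply: ler_sum => i _; exact/ltW/hi.
  rewrite sumrB sumr_const card_ord in s1.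
  have s2 : ((2 ^ k * 2 ^ m.+1)%N%:R : R) <= \sum_(i < 2 ^ k) 2 ^+ (v i).+1.
    have -> : \sum_(i < 2 ^ k) (2 : R) ^+ (v i).+1 = (\sum_(i < 2 ^ k) gg (v i))%N%:R.
      by rewrite natr_sum; apply: eq_bigr => i _; rewrite /gg natrX.
    by rewrite ler_nat.
  rewrite natrM [X in _ * X <= _]natrX in s2.
  have npos : (0 : R) < (2 ^ k)%:R by rewrite ltr0n.
  rewrite /Xbar ltr_pdivlMl //.
  have : (2 ^ k)%:R * x < (2 ^ k)%:R * (2 ^+ m.+1 - dl) by rewrite ltr_pM2l.
  rewrite -[dl *+ _]mulr_natr in s1.
  nra.
have mXbar : measurable [set t | x < Xbar t].
  rewrite gt_pre; apply: (mpre _); last exact: measurable_itv.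
  apply: measurable_realfun.measurable_funM; first exact: measurable_cst.
  exact: measurable_sum.
have mE : measurable E by apply: bigsetU_measurable => v _; exact: mrect.
rewrite hX; apply: (@le_trans _ _ (hh ^+ m)%:E); first by rewrite lee_fin.
apply: (@le_trans _ _ (P E)); last first.
  by apply: le_measure => //; rewrite inE.
rewrite PE lee_fin.
have -> : (2 ^ k * 2 ^ m.+1 = 2 ^ (k + m + 1))%N by rewrite -expnD; apply: f_equal; lia.
apply: key; rewrite /M; lia.
Qed.
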